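(* Let $n\ge2$, $K\ge1$, and write $\Phi_K=(P_{1,K},\dots,P_{n,K})\colon(\mathbb{C}^{n(n-1)/2})^K\to\mathbb{C}^n$. Then each $P_{k,K}$ is a polynomial that is no more than linear in each of the variables $z_{ij,l}$. Moreover, if $K$ is even, $P_{k,K}$ depends only on $Z_1,\dots,Z_{K-1}$ and the variables $z_{ij,K}$ with $1\le i<j\le k$ (in particular $P_{1,K}$ does not depend on $Z_K$); if $K$ is odd, $P_{k,K}$ depends only on $Z_1,\dots,Z_{K-1}$ and the variables $z_{ij,K}$ with $k\le j<i\le n$.
   Context: For $k$ even, $Z_k=(z_{ij,k})_{1\le i<j\le n}$ and $M_k(Z_k)$ is the upper triangular unipotent $n\times n$ matrix with entry $z_{ij,k}$ at $(i,j)$, $i<j$; for $k$ odd, $Z_k=(z_{ij,k})_{1\le j<i\le n}$ and $M_k(Z_k)$ is the lower triangular unipotent matrix with entry $z_{ij,k}$ at $(i,j)$, $i>j$. $\Psi_K(Z_1,\dots,Z_K)=M_1(Z_1)^{-1}\cdots M_K(Z_K)^{-1}$, $\pi_n$ maps a matrix to its last row, and $\Phi_K=\pi_n\circ\Psi_K$. A polynomial $p$ is no more than linear in a variable $x$ if $p=x\tilde p+\tilde q$ with $\tilde p,\tilde q$ polynomials independent of $x$. *)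

(* Defs.v *)
From HB Require Import structures.
From mathcomp Require Import all_boot all_order all_algebra.
Set Implicit Arguments. Unset Strict Implicit. Unset Printing Implicit Defensive.
Import Order.TTheory GRing.Theory Num.Theory.
Local Open Scope ring_scope.

(* Variable z_{ij,l}: l : 'I_K is the 0-based block index (paper index l.+1),
   i j : 'I_n 0-based row/column indices. *)
Definition var_t (K n : nat) := ('I_K * 'I_n * 'I_n)%type.

(* z_{ij,l} is an actual variable: paper index l.+1 even -> i < j (upper),
   odd -> j < i (lower). *)
Definition valid_var (K n : nat) (v : var_t K n) : bool :=
  let: (l, i, j) := v in
  if ~~ odd l.+1 then (i < j)%N else (j < i)%N.

Definition Mk (R : ringType) (K n : nat) (l : 'I_K) (Zl : 'M[R]_n) : 'M[R]_n :=
  \matrix_(i, j) (if i == j then 1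
                  else if valid_var (l, i, j) then Zl i j else 0).

Definition Psi (R : fieldType) (K n : nat) (Z : 'I_K -> 'M[R]_n) : 'M[R]_n :=
  \big[mulmx/1%:M]_(l < K) invmx (Mk l (Z l)).

Definition lastrow (R : ringType) (n : nat) : 'M[R]_n -> 'rV[R]_n :=
  match n return 'M[R]_n -> 'rV[R]_n with
  | 0 => fun _ => 0
  | m.+1 => fun A => row ord_max A
  end.

(* Phi_K = pi_n o Psi_K; its k-th component is P_{k,K} *)
Definition Phi (R : fieldType) (K n : nat) (Z : 'I_K -> 'M[R]_n) : 'rV[R]_n :=
  lastrow (Psi Z).

Inductive pexpr (V : Type) (R : Type) : Type :=
| PVar of V
| PConst of R
| PAdd of pexpr V R & pexpr V R
| PMul of pexpr V R & pexpr V R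
| POpp of pexpr V R.

Fixpoint peval (V : Type) (R : ringType) (e : V -> R) (p : pexpr V R) : R :=
  match p with
  | PVar v => e v
  | PConst c => c
  | PAdd p q => peval e p + peval e q
  | PMul p q => peval e p * peval e q
  | POpp p => - peval e p
  end.

Fixpoint pfree (V : eqType) (R : Type) (x : V) (p : pexpr V R) : bool :=
  match p with
  | PVar v => v != x
  | PConst _ => true
  | PAdd p q => pfree x p && pfree x q
  | PMul p q => pfree x p && pfree x q
  | POpp p => pfree x p
  end.

Definition env (R : Type) (K n : nat) (Z : 'I_K -> 'M[R]_n) (v : var_t K n) : R :=
  let: (l, i, j) := v in Z l i j.

(* Main.v *)
Require Import Defs.
From HB Require Import structures.
From mathcomp Require Import all_boot all_order all_algebra.
Import Order.TTheory GRing.Theory Num.Theory.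
Local Open Scope ring_scope.
From Stdlib Require Import FunctionalExtensionality.

Definition FreeF {R : numClosedFieldType} {K n : nat} (x : var_t K n)
  (F : ('I_K -> 'M[R]_n) -> R) :=
  exists p : pexpr (var_t K n) R, pfree x p /\ forall Z, F Z = peval (env Z) p.

Definition AffF {R : numClosedFieldType} {K n : nat} (x : var_t K n)
  (F : ('I_K -> 'M[R]_n) -> R) :=
  exists pt qt : pexpr (var_t K n) R, [/\ pfree x pt, pfree x qt &
    forall Z, F Z = env Z x * peval (env Z) pt + peval (env Z) qt].

Lemma Free_ext {R : numClosedFieldType} {K n : nat} (x : var_t K n) (F G : ('I_K -> 'M[R]_n) -> R) :
  (forall Z, F Z = G Z) -> FreeF x G -> FreeF x F.
Proof. by move=> e [p [h1 h2]]; exists p; split=> // Z; rewrite e. Qed.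

Lemma Aff_ext {R : numClosedFieldType} {K n : nat} (x : var_t K n) (F G : ('I_K -> 'M[R]_n) -> R) :
  (forall Z, F Z = G Z) -> AffF x G -> AffF x F.
Proof. by move=> e [p [q [h1 h2 h3]]]; exists p, q; split=> // Z; rewrite e. Qed.

Lemma Free_const {R : numClosedFieldType} {K n : nat} (x : var_t K n) (c : R) :
  FreeF x (fun _ => c).
Proof. by exists (PConst _ c). Qed.

Lemma Free_var {R : numClosedFieldType} {K n : nat} (x y : var_t K n) :
  y != x -> FreeF x (fun Z : 'I_K -> 'M[R]_n => env Z y).
Proof. by move=> h; exists (PVar _ y). Qed.

Lemma Free_add {R : numClosedFieldType} {K n : nat} (x : var_t K n) (F G : ('I_K -> 'M[R]_n) -> R) :
  FreeF x F -> FreeF x G -> FreeF x (fun Z => F Z + G Z).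
Proof.
by move=> [p [h1 h2]] [q [h3 h4]]; exists (PAdd p q); rewrite /= h1 h3; split=> // Z; rewrite h2 h4.
Qed.

Lemma Free_mul {R : numClosedFieldType} {K n : nat} (x : var_t K n) (F G : ('I_K -> 'M[R]_n) -> R) :
  FreeF x F -> FreeF x G -> FreeF x (fun Z => F Z * G Z).
Proof.
by move=> [p [h1 h2]] [q [h3 h4]]; exists (PMul p q); rewrite /= h1 h3; split=> // Z; rewrite h2 h4.
Qed.

Lemma Free_opp {R : numClosedFieldType} {K n : nat} (x : var_t K n) (F : ('I_K -> 'M[R]_n) -> R) :
  FreeF x F -> FreeF x (fun Z => - F Z).
Proof. by move=> [p [h1 h2]]; exists (POpp p); split=> // Z; rewrite h2. Qed.

Lemma Free_sum {R : numClosedFieldType} {K n : nat} (x : var_t K n) (I : Type) (r : seq I)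
  (P : pred I) (G : I -> ('I_K -> 'M[R]_n) -> R) :
  (forall i, P i -> FreeF x (G i)) -> FreeF x (fun Z => \sum_(i <- r | P i) G i Z).
Proof.
move=> h; elim: r => [|a r ih].
  by apply: (@Free_ext _ _ _ _ _ (fun _ => 0)) => [Z|]; [rewrite big_nil|apply: Free_const].
case Pa: (P a).
  apply: (@Free_ext _ _ _ _ _ (fun Z => G a Z + \sum_(i <- r | P i) G i Z)) => [Z|].
    by rewrite big_cons Pa.
  exact: Free_add (h _ Pa) ih.
by eapply Free_ext; last exact ih; move=> Z; rewrite big_cons Pa.
Qed.

Lemma Aff_Free {R : numClosedFieldType} {K n : nat} (x : var_t K n) (F : ('I_K -> 'M[R]_n) -> R) :
  FreeF x F -> AffF x F.
Proof. by move=> [p [h1 h2]]; exists (PConst _ 0), p; split=> // Z; rewrite h2 /= mulr0 add0r. Qed.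

Lemma Aff_var {R : numClosedFieldType} {K n : nat} (x : var_t K n) :
  AffF x (fun Z : 'I_K -> 'M[R]_n => env Z x).
Proof. by exists (PConst _ 1), (PConst _ 0); split=> // Z; rewrite /= mulr1 addr0. Qed.

Lemma Aff_add {R : numClosedFieldType} {K n : nat} (x : var_t K n) (F G : ('I_K -> 'M[R]_n) -> R) :
  AffF x F -> AffF x G -> AffF x (fun Z => F Z + G Z).
Proof.
move=> [p [q [h1 h2 h3]]] [p' [q' [h1' h2' h3']]].
exists (PAdd p p'), (PAdd q q'); rewrite /= h1 h2 h1' h2'; split=> // Z.
by rewrite h3 h3' mulrDr addrACA.
Qed.

Lemma Aff_opp {R : numClosedFieldType} {K n : nat} (x : var_t K n) (F : ('I_K -> 'M[R]_n) -> R) :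
  AffF x F -> AffF x (fun Z => - F Z).
Proof.
move=> [p [q [h1 h2 h3]]]; exists (POpp p), (POpp q); split=> // Z.
by rewrite h3 /= opprD mulrN.
Qed.

Lemma Aff_mull {R : numClosedFieldType} {K n : nat} (x : var_t K n) (F G : ('I_K -> 'M[R]_n) -> R) :
  AffF x F -> FreeF x G -> AffF x (fun Z => F Z * G Z).
Proof.
move=> [p [q [h1 h2 h3]]] [c [h4 h5]].
exists (PMul p c), (PMul q c); rewrite /= h1 h2 h4; split=> // Z.
by rewrite h3 h5 /= mulrDl mulrA.
Qed.

Lemma Aff_mulr {R : numClosedFieldType} {K n : nat} (x : var_t K n) (F G : ('I_K -> 'M[R]_n) -> R) :
  FreeF x F -> AffF x G -> AffF x (fun Z => F Z * G Z).
Proof.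
by move=> h1 h2; apply: (@Aff_ext _ _ _ _ _ (fun Z => G Z * F Z)) => [Z|]; [rewrite mulrC|apply: Aff_mull].
Qed.

Lemma Aff_sum {R : numClosedFieldType} {K n : nat} (x : var_t K n) (I : Type) (r : seq I)
  (P : pred I) (G : I -> ('I_K -> 'M[R]_n) -> R) :
  (forall i, P i -> AffF x (G i)) -> AffF x (fun Z => \sum_(i <- r | P i) G i Z).
Proof.
move=> h; elim: r => [|a r ih].
  by apply: (@Aff_ext _ _ _ _ _ (fun _ => 0)) => [Z|]; [rewrite big_nil|apply/Aff_Free/Free_const].
case Pa: (P a).
  apply: (@Aff_ext _ _ _ _ _ (fun Z => G a Z + \sum_(i <- r | P i) G i Z)) => [Z|].
    by rewrite big_cons Pa.
  exact: Aff_add (h _ Pa) ih.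
by eapply Aff_ext; last exact ih; move=> Z; rewrite big_cons Pa.
Qed.

Lemma inv_rec {R : numClosedFieldType} {n : nat} (U : 'M[R]_n) t k :
  U \in unitmx -> U k k = 1 ->
  invmx U t k = (t == k)%:R - \sum_(s | s != k) invmx U t s * U s k.
Proof.
move=> Uu Ukk; have := congr1 (fun M : 'M[R]_n => M t k) (mulVmx Uu).
by rewrite !mxE (bigD1 k) //= Ukk mulr1 => <-; rewrite addrK.
Qed.

Lemma inv_aff {R : numClosedFieldType} {K n : nat} (l : 'I_K) (g : 'I_n -> nat)
  (f : ('I_K -> 'M[R]_n) -> 'M[R]_n) :
  (forall Z, f Z \in unitmx) ->
  (forall Z s t, f Z s t = if s == t then 1 else if (g s < g t)%N then Z l s t else 0) ->
  forall t k, (forall x, AffF x (fun Z => invmx (f Z) t k)) /\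
    (forall x : var_t K n, (x.1.1 != l) || (g k < g x.2)%N -> FreeF x (fun Z => invmx (f Z) t k)).
Proof.
move=> fu fE t0 k0.
suff: forall m k, (g k < m)%N -> (forall t, (forall x, AffF x (fun Z => invmx (f Z) t k)) /\
    (forall x : var_t K n, (x.1.1 != l) || (g k < g x.2)%N -> FreeF x (fun Z => invmx (f Z) t k))).
  by move=> /(_ (g k0).+1 k0 (ltnSn _) t0).
elim=> [//|m ih] k lt_k t.
have rec Z : invmx (f Z) t k = (t == k)%:R - \sum_(s | s != k) invmx (f Z) t s * f Z s k.
  by apply: inv_rec; rewrite ?fE ?eqxx.
split.
- move=> x; eapply Aff_ext; first exact: rec.
  apply: Aff_add; first exact/Aff_Free/Free_const.
  apply: Aff_opp; apply: Aff_sum => s nsk.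
  case: (ltnP (g s) (g k)) => gsk.
  + have ih' := ih s (leq_trans gsk lt_k) t.
    have fe Z : invmx (f Z) t s * f Z s k = invmx (f Z) t s * env Z (l, s, k).
      by rewrite fE (negbTE nsk) gsk.
    eapply Aff_ext; first exact: fe.
    case: (eqVneq (l, s, k) x) => [<-|nx].
    * apply: Aff_mulr; last exact: Aff_var.
      by apply: ih'.2 => /=; rewrite gsk orbT.
    * by apply: Aff_mull; [apply: ih'.1|apply: Free_var].
  + apply/Aff_Free.
    eapply Free_ext; first by move=> Z; rewrite fE (negbTE nsk) ltnNge gsk /= mulr0.
    exact: Free_const.
- move=> x hx; eapply Free_ext; first exact: rec.
  apply: Free_add; first exact: Free_const.
  apply: Free_opp; apply: Free_sum => s nsk.
  case: (ltnP (g s) (g k)) => gsk.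
  + have ih' := ih s (leq_trans gsk lt_k) t.
    have fe Z : invmx (f Z) t s * f Z s k = invmx (f Z) t s * env Z (l, s, k).
      by rewrite fE (negbTE nsk) gsk.
    eapply Free_ext; first exact: fe.
    apply: Free_mul.
      apply: ih'.2; case/orP: hx => [->//|h]; by rewrite (ltn_trans gsk h) orbT.
    apply: Free_var; apply/eqP => ex; move: hx; rewrite -ex /= eqxx ltnn.
    done.
  + eapply Free_ext; first by move=> Z; rewrite fE (negbTE nsk) ltnNge gsk /= mulr0.
    exact: Free_const.
Qed.

Lemma inv_dep {R : numClosedFieldType} {n : nat} (g : 'I_n -> nat) (U U' : 'M[R]_n) k0 :
  U \in unitmx -> U' \in unitmx ->
  (forall s, U s s = 1) -> (forall s, U' s s = 1) ->
  (forall s t, s != t -> ~~ (g s < g t)%N -> U s t = 0 /\ U' s t = 0) ->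
  (forall s b, (g b <= g k0)%N -> U s b = U' s b) ->
  forall t, invmx U t k0 = invmx U' t k0.
Proof.
move=> Uu Uu' U1 U1' U0 agr.
suff: forall m k, (g k < m)%N -> (g k <= g k0)%N -> forall t, invmx U t k = invmx U' t k.
  by move=> /(_ (g k0).+1 k0 (ltnSn _) (leqnn _)).
elim=> [//|m ih] k lt_k le_k t.
rewrite (inv_rec _ _ _ Uu) // (inv_rec _ _ _ Uu') //; congr (_ - _).
apply: eq_bigr => s nsk.
case: (ltnP (g s) (g k)) => gsk.
  by rewrite (ih s (leq_trans gsk lt_k) (ltnW (leq_trans gsk le_k))) agr.
have hs : ~~ (g s < g k)%N by rewrite -leqNgt.
by have [-> ->] := U0 s k nsk hs; rewrite !mulr0.
Qed.

Definition gl {K n : nat} (l : 'I_K) (s : 'I_n) : nat :=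
  if ~~ odd l.+1 then val s else (n - val s)%N.

Lemma valid_g {K n : nat} (l : 'I_K) (s t : 'I_n) :
  valid_var (l, s, t) = (gl l s < gl l t)%N.
Proof. rewrite /valid_var /gl; case: ifP => _ //; by rewrite ltn_sub2lE // (ltnW (ltn_ord s)). Qed.

Lemma Mk_E {R : numClosedFieldType} {K n : nat} (l : 'I_K) (M : 'M[R]_n) s t :
  Mk l M s t = if s == t then 1 else if (gl l s < gl l t)%N then M s t else 0.
Proof. by rewrite mxE valid_g. Qed.

Lemma Mk_unit {R : numClosedFieldType} {K n : nat} (l : 'I_K) (M : 'M[R]_n) :
  Mk l M \in unitmx.
Proof.
rewrite unitmxE.
suff -> : \det (Mk l M) = 1 by apply: unitr1.
have diag1 : \prod_(i < n) Mk l M i i = 1 by apply: big1 => i _; rewrite mxE eqxx.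
case E: (odd l.+1).
  rewrite det_trig ?diag1 //; apply/is_trig_mxP => i j lij.
  rewrite mxE /valid_var E /=; case: eqP => [e|_]; first by move: lij; rewrite e ltnn.
  by rewrite ltnNge (ltnW lij).
rewrite -det_tr det_trig; last first.
  apply/is_trig_mxP => i j lij.
  rewrite !mxE /valid_var E /=; case: eqP => [e|_]; first by move: lij; rewrite e ltnn.
  by rewrite ltnNge (ltnW lij).
by rewrite -[RHS]diag1; apply: eq_bigr => i _; rewrite mxE.
Qed.

Lemma prod_aff {R : numClosedFieldType} {K n : nat}
  (N : 'I_K -> ('I_K -> 'M[R]_n) -> 'M[R]_n) (r : seq 'I_K) :
  uniq r ->
  (forall l i j, (forall x, AffF x (fun Z => N l Z i j)) /\
     (forall x : var_t K n, x.1.1 != l -> FreeF x (fun Z => N l Z i j))) ->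
  forall i j, (forall x, AffF x (fun Z => (\big[mulmx/1%:M]_(l <- r) N l Z) i j)) /\
     (forall x : var_t K n, x.1.1 \notin r -> FreeF x (fun Z => (\big[mulmx/1%:M]_(l <- r) N l Z) i j)).
Proof.
move=> + hN; elim: r => [|a r ih] /=.
  move=> _ i j.
  have e Z : (\big[mulmx/1%:M]_(l <- [::]) N l Z) i j = (i == j)%:R by rewrite big_nil mxE.
  split=> [x|x _]; [apply: Aff_Free|]; (eapply Free_ext; [exact: e|exact: Free_const]).
case/andP=> anr ur i j.
have e Z : (\big[mulmx/1%:M]_(l <- a :: r) N l Z) i j =
    \sum_t N a Z i t * (\big[mulmx/1%:M]_(l <- r) N l Z) t j by rewrite big_cons mxE.
split.
- move=> x; eapply Aff_ext; first exact: e.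
  apply: Aff_sum => t _.
  case: (eqVneq x.1.1 a) => [xa|xa].
    apply: Aff_mull; first exact: (hN a i t).1.
    by apply: (ih ur t j).2; rewrite xa.
  apply: Aff_mulr; first exact: (hN a i t).2.
  exact: (ih ur t j).1.
- move=> x; rewrite inE negb_or => /andP[xa xr].
  eapply Free_ext; first exact: e.
  apply: Free_sum => t _; apply: Free_mul; first exact: (hN a i t).2.
  exact: (ih ur t j).2.
Qed.

Lemma Phi_E {R : numClosedFieldType} {K n : nat} (Z : 'I_K -> 'M[R]_n.+1) k :
  Phi Z 0 k = Psi Z ord_max k.
Proof. by rewrite /Phi /= mxE. Qed.

Lemma Psi_recr {R : numClosedFieldType} {K n : nat} (Z : 'I_K.+1 -> 'M[R]_n.+1) :
  Psi Z = (\prod_(l < K) invmx (Mk (widen_ord (leqnSn K) l) (Z (widen_ord (leqnSn K) l))))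
           *m invmx (Mk (ord_max : 'I_K.+1) (Z ord_max)).
Proof. by rewrite /Psi mulmxE idmxE big_ord_recr. Qed.

Lemma dep_last {R : numClosedFieldType} {K n : nat} (Z Z' : 'I_K.+1 -> 'M[R]_n.+1) k :
  (forall (l : 'I_K.+1) i j, valid_var (l, i, j) -> (l.+1 < K.+1)%N -> Z l i j = Z' l i j) ->
  (forall s b, (gl (ord_max : 'I_K.+1) b <= gl (ord_max : 'I_K.+1) k)%N ->
      valid_var ((ord_max : 'I_K.+1), s, b) -> Z ord_max s b = Z' ord_max s b) ->
  Phi Z 0 k = Phi Z' 0 k.
Proof.
move=> h1 h2; rewrite !Phi_E !Psi_recr !mxE; apply: eq_bigr => t _; congr (_ * _).
  congr (_ ord_max t).
  rewrite (eq_bigr (fun l => invmx (Mk (widen_ord (leqnSn K) l) (Z' (widen_ord (leqnSn K) l))))) // => l _.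
  congr invmx.
  apply/matrixP => i j; rewrite !mxE; case: ifP => // _; case: ifP => // v.
  by apply: h1 v _; rewrite /= ltnS ltn_ord.
apply: (@inv_dep _ _ (gl (ord_max : 'I_K.+1))); rewrite ?Mk_unit //.
- by move=> s; rewrite mxE eqxx.
- by move=> s; rewrite mxE eqxx.
- by move=> s u nst ng; rewrite !Mk_E (negbTE nst) (negbTE ng).
- move=> s b le; rewrite !mxE; case: ifP => // _; case: ifP => // v.
  exact: h2.
Qed.

Theorem mainTheorem10 (R : numClosedFieldType) (n K : nat)
    (hn : (2 <= n)%N) (hK : (1 <= K)%N) :
  (forall k : 'I_n,
     (* P_{k,K} is a polynomial *)
     (exists p : pexpr (var_t K n) R,
        forall Z : 'I_K -> 'M[R]_n, Phi Z 0 k = peval (env Z) p) /\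
     (* no more than linear in each variable z_{ij,l} *)
     (forall x : var_t K n, valid_var x ->
        exists pt qt : pexpr (var_t K n) R,
          [/\ pfree x pt, pfree x qt &
              forall Z : 'I_K -> 'M[R]_n,
                Phi Z 0 k = env Z x * peval (env Z) pt + peval (env Z) qt])) /\
  (~~ odd K ->
     forall (k : 'I_n) (Z Z' : 'I_K -> 'M[R]_n),
       (forall (l : 'I_K) (i j : 'I_n), valid_var (l, i, j) ->
          (l.+1 < K)%N \/ (i < j <= k)%N -> Z l i j = Z' l i j) ->
       Phi Z 0 k = Phi Z' 0 k) /\
  (odd K ->
     forall (k : 'I_n) (Z Z' : 'I_K -> 'M[R]_n),
       (forall (l : 'I_K) (i j : 'I_n), valid_var (l, i, j) ->
          (l.+1 < K)%N \/ (k <= j < i)%N -> Z l i j = Z' l i j) ->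
       Phi Z 0 k = Phi Z' 0 k).
Proof.
case: n hn => [//|n] hn.
have hinv : forall (l : 'I_K) (i j : 'I_n.+1),
    (forall x, AffF x (fun Z : 'I_K -> 'M[R]_n.+1 => invmx (Mk l (Z l)) i j)) /\
    (forall x : var_t K n.+1, x.1.1 != l -> FreeF x (fun Z : 'I_K -> 'M[R]_n.+1 => invmx (Mk l (Z l)) i j)).
  move=> l i j.
  have [h1 h2] := @inv_aff R K n.+1 l (gl l) (fun Z => Mk l (Z l))
     (fun Z => Mk_unit _ _) (fun Z s t => Mk_E _ _ s t) i j.
  by split=> // x hx; apply: h2; rewrite hx.
have hprod := prod_aff (fun l Z => invmx (Mk l (Z l))) (index_enum 'I_K) (index_enum_uniq _) hinv.
split.
  move=> k; have [A _] := hprod ord_max k.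
  have PhiE (Z : 'I_K -> 'M[R]_n.+1) : Phi Z 0 k =
      (\big[mulmx/1%:M]_(l <- index_enum 'I_K) invmx (Mk l (Z l))) ord_max k.
    by rewrite Phi_E.
  split.
  - have x0 : var_t K n.+1 := (Ordinal hK, k, k).
    have [pt [qt [_ _ e]]] := A x0.
    by exists (PAdd (PMul (PVar _ x0) pt) qt) => Z; rewrite PhiE e.
  - move=> x _; have [pt [qt [h1 h2 e]]] := A x.
    by exists pt, qt; split=> // Z; rewrite PhiE e.
case: K hK {hinv hprod} => [//|K] hK.
split.
- move=> ev k Z Z' h; apply: dep_last => [l i j v lt|s b].
    by apply: (h _ _ _ v); left.
  rewrite /gl /valid_var /= ev => le v.
  by apply: h; [rewrite /valid_var /= ev|right; rewrite v le].
- move=> od k Z Z' h; apply: dep_last => [l i j v lt|s b].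
    by apply: (h _ _ _ v); left.
  move: od => /= /negbTE od.
  rewrite /gl /valid_var /= od /= leq_sub2lE ?(ltnW (ltn_ord k)) // => le v.
  by apply: h; [rewrite /valid_var /= od /=|right; rewrite v le].
Qed.
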